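(* Let $G$ be a topological group and let $\mathcal{K}$ be a collection of $G$-spaces that is closed under taking projective limits. Then every $\mathcal{K}$-universal $G$-space $M$ is coalescent: every epimorphism $\varphi: M \to M$ is injective, hence an isomorphism.
   Context: A $G$-space is a nonempty compact Hausdorff space $X$ together with a jointly continuous action $G \times X \to X$ of the (Hausdorff) topological group $G$. An epimorphism of $G$-spaces is a surjective continuous $G$-equivariant map; $Y$ is a factor of $X$ if there is an epimorphism $X \to Y$. An isomorphism is a bijective epimorphism (equivalently a $G$-equivariant homeomorphism). Given a collection $\mathcal{K}$ of $G$-spaces, a $G$-space $M$ is $\mathcal{K}$-universal if $M \in \mathcal{K}$ and every $N \in \mathcal{K}$ is a factor of $M$. $\mathcal{K}$ is closed under taking projective limits means: whenever $\alpha$ is an ordinal, $(X_\gamma)_{\gamma<\alpha}$ are $G$-spaces in $\mathcal{K}$ and $\phi_{\delta,\gamma}: X_\gamma \to X_\delta$ ($\delta \le \gamma < \alpha$) are epimorphisms with $\phi_{\gamma,\gamma}=\mathrm{id}$ and $\phi_{\delta,\epsilon} = \phi_{\delta,\gamma}\circ\phi_{\gamma,\epsilon}$ for $\delta\le\gamma\le\epsilon$, the projective (inverse) limit $\{(x_\gamma)_{\gamma<\alpha} \in \prod_{\gamma<\alpha} X_\gamma : \phi_{\delta,\gamma}(x_\gamma)=x_\delta \text{ for all } \delta\le\gamma\}$, with the product topology and diagonal $G$-action, belongs to $\mathcal{K}$. A $G$-space $M$ is coalescent if every epimorphism $M \to M$ is an isomorphism. *)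

(* Defs.v *)
From Stdlib Require Import List.
Import ListNotations.
Set Implicit Arguments.

Definition is_topology {X : Type} (op : (X -> Prop) -> Prop) : Prop :=
  op (fun _ => True) /\
  (forall U V, op U -> op V -> op (fun x => U x /\ V x)) /\
  (forall F : (X -> Prop) -> Prop,
      (forall U, F U -> op U) -> op (fun x => exists U, F U /\ U x)).

Definition continuous {X Y : Type} (opX : (X -> Prop) -> Prop)
  (opY : (Y -> Prop) -> Prop) (f : X -> Y) : Prop :=
  forall V, opY V -> opX (fun x => V (f x)).

Definition prod_open {X Y : Type} (opX : (X -> Prop) -> Prop)
  (opY : (Y -> Prop) -> Prop) (W : X * Y -> Prop) : Prop :=
  forall p, W p -> exists A B, opX A /\ opY B /\ A (fst p) /\ B (snd p) /\
    forall q, A (fst q) -> B (snd q) -> W q.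

Definition hausdorff {X : Type} (op : (X -> Prop) -> Prop) : Prop :=
  forall x y : X, x <> y ->
    exists U V, op U /\ op V /\ U x /\ V y /\ forall z, ~ (U z /\ V z).

Definition compact {X : Type} (op : (X -> Prop) -> Prop) : Prop :=
  forall F : (X -> Prop) -> Prop,
    (forall U, F U -> op U) -> (forall x, exists U, F U /\ U x) ->
    exists l : list (X -> Prop),
      (forall U, In U l -> F U) /\ forall x, exists U, In U l /\ U x.

Record TopGroup := mkTopGroup {
  tg_carrier :> Type;
  tg_mul : tg_carrier -> tg_carrier -> tg_carrier;
  tg_inv : tg_carrier -> tg_carrier;
  tg_one : tg_carrier;
  tg_open : (tg_carrier -> Prop) -> Prop;
  tg_assoc : forall a b c, tg_mul a (tg_mul b c) = tg_mul (tg_mul a b) c;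
  tg_one_l : forall a, tg_mul tg_one a = a;
  tg_one_r : forall a, tg_mul a tg_one = a;
  tg_inv_l : forall a, tg_mul (tg_inv a) a = tg_one;
  tg_inv_r : forall a, tg_mul a (tg_inv a) = tg_one;
  tg_top : is_topology tg_open;
  tg_hausdorff : hausdorff tg_open;
  tg_mul_cont : continuous (prod_open tg_open tg_open)
                  tg_open (fun p => tg_mul (fst p) (snd p));
  tg_inv_cont : continuous tg_open tg_open tg_inv }.

Section GSpaces.
Variable G : TopGroup.

Definition is_gspace {X : Type} (op : (X -> Prop) -> Prop) (act : G -> X -> X) : Prop :=
  is_topology op /\ inhabited X /\ compact op /\ hausdorff op /\
  continuous (prod_open (tg_open G) op) op (fun p => act (fst p) (snd p)) /\
  (forall x, act (tg_one G) x = x) /\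
  (forall g h x, act g (act h x) = act (tg_mul G g h) x).

Record GSpace := mkGSpace {
  gs_carrier :> Type;
  gs_open : (gs_carrier -> Prop) -> Prop;
  gs_act : G -> gs_carrier -> gs_carrier;
  gs_ax : is_gspace gs_open gs_act }.

Definition equivariant (X Y : GSpace) (f : X -> Y) : Prop :=
  forall g x, f (gs_act X g x) = gs_act Y g (f x).

Definition epimorphism (X Y : GSpace) (f : X -> Y) : Prop :=
  (forall y, exists x, f x = y) /\ continuous (gs_open X) (gs_open Y) f /\
  equivariant X Y f.

Definition isomorphism (X Y : GSpace) (f : X -> Y) : Prop :=
  epimorphism X Y f /\ (forall x x', f x = f x' -> x = x').

Definition factor_of (Y X : GSpace) : Prop := exists f : X -> Y, epimorphism X Y f.

Definition universal (K : GSpace -> Prop) (M : GSpace) : Prop :=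
  K M /\ forall N, K N -> factor_of N M.

Definition coalescent (M : GSpace) : Prop :=
  forall f : M -> M, epimorphism M M f -> isomorphism M M f.

(** An ordinal alpha is represented by the index set {gamma < alpha}, i.e. a
    type with a strict well-order (well-founded, transitive, trichotomous).
    The bonding maps are given for all pairs, but only those with
    delta <= gamma are constrained or used. *)

Record InvSys := mkInvSys {
  sys_idx : Type;
  sys_lt : sys_idx -> sys_idx -> Prop;
  sys_lt_wf : well_founded sys_lt;
  sys_lt_trans : forall a b c, sys_lt a b -> sys_lt b c -> sys_lt a c;
  sys_lt_total : forall a b, sys_lt a b \/ a = b \/ sys_lt b a;
  sys_sp : sys_idx -> GSpace;
  sys_map : forall d g : sys_idx, sys_sp g -> sys_sp d;
  sys_map_epi : forall d g, (sys_lt d g \/ d = g) ->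
      epimorphism (sys_sp g) (sys_sp d) (sys_map d g);
  sys_map_id : forall g x, sys_map g g x = x;
  sys_map_comp : forall d g e, (sys_lt d g \/ d = g) -> (sys_lt g e \/ g = e) ->
      forall x, sys_map d e x = sys_map d g (sys_map g e x) }.

Definition lim_carrier (S : InvSys) : Type :=
  { x : forall i, sys_sp S i |
    forall d g, (sys_lt S d g \/ d = g) -> sys_map S d g (x g) = x d }.

(* subspace topology of the product topology *)
Definition lim_open (S : InvSys) (U : lim_carrier S -> Prop) : Prop :=
  forall x, U x ->
    exists (l : list (sys_idx S)) (V : forall i, sys_sp S i -> Prop),
      (forall i, In i l -> gs_open (sys_sp S i) (V i)) /\
      (forall i, In i l -> V i (proj1_sig x i)) /\
      (forall y : lim_carrier S, (forall i, In i l -> V i (proj1_sig y i)) -> U y).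

Lemma lim_act_compat (S : InvSys) (g : G) (x : lim_carrier S) :
  forall d e, (sys_lt S d e \/ d = e) ->
    sys_map S d e (gs_act _ g (proj1_sig x e)) = gs_act _ g (proj1_sig x d).
Proof.
  intros d e H. destruct (@sys_map_epi S d e H) as [_ [_ Heq]].
  rewrite Heq, (proj2_sig x _ _ H). reflexivity.
Qed.

Definition lim_act (S : InvSys) (g : G) (x : lim_carrier S) : lim_carrier S :=
  exist _ (fun i => gs_act _ g (proj1_sig x i)) (@lim_act_compat S g x).

(* K is closed under projective limits: whenever all X_gamma are in K, the
   projective limit (which is always a G-space; the proof H is irrelevant)
   belongs to K. *)
Definition closed_under_proj_limits (K : GSpace -> Prop) : Prop :=
  forall S : InvSys, (forall i, K (sys_sp S i)) ->
    forall H : is_gspace (@lim_open S) (@lim_act S),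
      K (@mkGSpace (lim_carrier S) (@lim_open S) (@lim_act S) H).

End GSpaces.

(* Main.v *)
From Stdlib Require Import List Wellfounded Classical ClassicalEpsilon FunctionalExtensionality PropExtensionality ProofIrrelevance.

Section Ord.
Variable X : Type.
Inductive W : Type := zer : W | sup : (X -> W) -> W.

Fixpoint wle (s t : W) : Prop :=
  match s with
  | zer => True
  | sup f => forall a, match t with zer => False | sup g => exists b, wle (f a) (g b) end
  end.
Definition wlt (s t : W) : Prop :=
  match t with zer => False | sup g => exists b, wle s (g b) end.

Lemma wle_sup f t : wle (sup f) t <-> forall a, wlt (f a) t.
Proof. simpl. destruct t; simpl; tauto. Qed.

Lemma wle_refl s : wle s s.
Proof. induction s as [|f IH]; simpl; auto. intro a. exists a. apply IH. Qed.

Lemma wle_trans r s t : wle r s -> wle s t -> wle r t.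
Proof.
  revert s t. induction r as [|f IH]; intros s t H1 H2; simpl; auto.
  intro a. destruct s as [|g]; simpl in H1. { destruct (H1 a). }
  destruct (H1 a) as [b Hb].
  destruct t as [|h]; simpl in H2. { destruct (H2 b). }
  destruct (H2 b) as [c Hc]. exists c. eapply IH; eauto.
Qed.

Lemma wlt_le r s t : wlt r s -> wle s t -> wlt r t.
Proof.
  intros H1 H2. destruct s as [|g]; simpl in H1. destruct H1.
  destruct H1 as [b Hb]. destruct t as [|h]; simpl in H2.
  - destruct (H2 b).
  - destruct (H2 b) as [c Hc]. exists c. eapply wle_trans; eauto.
Qed.

Lemma wle_lt r s t : wle r s -> wlt s t -> wlt r t.
Proof.
  intros H1 H2. destruct t as [|h]; simpl in *. destruct H2.
  destruct H2 as [c Hc]. exists c. eapply wle_trans; eauto.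
Qed.

Lemma wlt_sup g b : wlt (g b) (sup g).
Proof. simpl. exists b. apply wle_refl. Qed.

Lemma wlt_wle s t : wlt s t -> wle s t.
Proof.
  revert t. induction s as [|f IH]; intros t H; simpl; auto.
  destruct t as [|g]. destruct H. destruct H as [b Hb].
  intro a. simpl in Hb. destruct (g b) as [|h] eqn:E. destruct (Hb a).
  assert (Hlt : wlt (f a) (g b)) by (rewrite E; exact (Hb a)).
  pose proof (wle_lt _ _ _ (IH a _ Hlt) (wlt_sup g b)) as H. exact H.
Qed.

Lemma wlt_trans r s t : wlt r s -> wlt s t -> wlt r t.
Proof. intros H1 H2. eapply wle_lt; [apply wlt_wle; exact H1| exact H2]. Qed.

Lemma wlt_wf : well_founded wlt.
Proof.
  assert (H : forall t s, wle s t -> Acc wlt s).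
  { induction t as [|g IH]; intros s Hs; constructor; intros r Hr.
    - pose proof (wlt_le _ _ _ Hr Hs) as C. destruct C.
    - pose proof (wlt_le _ _ _ Hr Hs) as C. destruct C as [b Hb]. eapply IH; eauto. }
  intro s. apply (H s), wle_refl.
Qed.

Lemma wlt_irrefl s : ~ wlt s s.
Proof.
  intro H. induction (wlt_wf s) as [s _ IH]. exact (IH s H H).
Qed.

Lemma wtotal s t : (wle s t \/ wlt t s) /\ (wle t s \/ wlt s t).
Proof.
  revert t. induction s as [|f IH]; intro t.
  - split. left; exact I. destruct t as [|g]. left; exact I.
    destruct (classic (forall a, wlt (g a) zer)) as [H|H].
    + left. simpl. intro a. exact (H a).
    + right. apply not_all_ex_not in H. destruct H as [a Ha]. exists a. exact I.
  - assert (P1 : forall t, wle (sup f) t \/ wlt t (sup f)).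
    { intro t0. destruct (classic (forall a, wlt (f a) t0)) as [H|H].
      - left. apply wle_sup. exact H.
      - right. apply not_all_ex_not in H. destruct H as [a Ha].
        destruct (proj2 (IH a t0)) as [H1|H1]; [|contradiction].
        exists a. exact H1. }
    split. apply P1.
    destruct t as [|g]. left; exact I.
    destruct (classic (forall b, wlt (g b) (sup f))) as [H|H].
    + left. apply wle_sup. exact H.
    + right. apply not_all_ex_not in H. destruct H as [b Hb].
      destruct (P1 (g b)) as [H1|H1]; [|contradiction]. exists b. exact H1.
Qed.

Definition weq s t := wle s t /\ wle t s.

Definition rep (s : W) : W := epsilon (inhabits s) (fun u => weq s u).

Lemma rep_spec s : weq s (rep s).
Proof. unfold rep. apply epsilon_spec. exists s. split; apply wle_refl. Qed.

Lemma rep_eq s t : weq s t -> rep s = rep t.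
Proof.
  intros [H1 H2]. unfold rep.
  assert (E : (fun u => weq s u) = (fun u => weq t u)).
  { apply functional_extensionality; intro u. apply propositional_extensionality.
    unfold weq; split; intros [A B]; split; eapply wle_trans; eauto. }
  rewrite E. f_equal. apply proof_irrelevance.
Qed.

Definition Ix := { s : W | rep s = s }.
Definition ilt (i j : Ix) : Prop := wlt (proj1_sig i) (proj1_sig j).

Lemma ilt_wf : well_founded ilt.
Proof. unfold ilt. apply wf_inverse_image, wlt_wf. Qed.
Lemma ilt_trans a b c : ilt a b -> ilt b c -> ilt a c.
Proof. unfold ilt. apply wlt_trans. Qed.

Lemma Ix_eq (i j : Ix) : proj1_sig i = proj1_sig j -> i = j.
Proof. destruct i, j; simpl; intro; subst. f_equal. apply proof_irrelevance. Qed.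

Lemma ilt_total a b : ilt a b \/ a = b \/ ilt b a.
Proof.
  destruct a as [s Hs], b as [t Ht]. unfold ilt; simpl.
  destruct (wtotal s t) as [[H1|H1] [H2|H2]]; auto.
  right; left. apply Ix_eq; simpl. rewrite <- Hs, <- Ht. apply rep_eq. split; auto.
Qed.

Definition mk (s : W) : Ix.
Proof. exists (rep s). apply rep_eq. destruct (rep_spec s); split; auto. Defined.

Lemma ilt_irrefl i : ~ ilt i i.
Proof. apply wlt_irrefl. Qed.

Definition isucc (i : Ix) : Ix := mk (sup (fun _ => proj1_sig i)).

Lemma isucc_gt (Xi : X) i : ilt i (isucc i).
Proof.
  unfold ilt, isucc, mk; simpl. eapply wlt_le; [| apply (proj1 (rep_spec _))].
  apply (wlt_sup (fun _ => proj1_sig i) Xi).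
Qed.

Lemma isucc_le i j : ilt i j -> ilt (isucc i) j \/ isucc i = j.
Proof.
  intro H. destruct (ilt_total (isucc i) j) as [A|[A|A]]; auto. exfalso.
  assert (Hle : wle (sup (fun _ => proj1_sig i)) (proj1_sig j)).
  { apply wle_sup. intro; exact H. }
  unfold ilt, isucc, mk in A; simpl in A.
  apply (wlt_irrefl (proj1_sig j)). eapply wlt_le. exact A.
  eapply wle_trans. apply (proj2 (rep_spec _)). exact Hle.
Qed.

Lemma no_inj (e : Ix -> X) : (forall i j, e i = e j -> i = j) -> False.
Proof.
  intro Hinj.
  set (h := fun x : X => match excluded_middle_informative (exists i, e i = x) with
              | left H => proj1_sig (proj1_sig (constructive_indefinite_description _ H))
              | right _ => zer end).
  assert (Hall : forall i : Ix, wlt (proj1_sig i) (sup h)).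
  { intro i. simpl. exists (e i). unfold h.
    destruct (excluded_middle_informative _) as [H|H].
    - destruct (constructive_indefinite_description _ H) as [i' Hi']; simpl.
      rewrite (Hinj _ _ Hi'). apply wle_refl.
    - exfalso; apply H; eauto. }
  specialize (Hall (mk (sup h))). change (wlt (rep (sup h)) (sup h)) in Hall.
  apply (wlt_irrefl (rep (sup h))). eapply wlt_le. exact Hall. apply (proj1 (rep_spec _)).
Qed.
End Ord.

Lemma wf_rec_exists {J A : Type} (lt : J -> J -> Prop) (wf : well_founded lt)
  (tr : forall a b c, lt a b -> lt b c -> lt a c)
  (Ainh : inhabited A) (Q : J -> (J -> A) -> A -> Prop)
  (Hloc : forall e x x' z, (forall d, lt d e -> x d = x' d) -> Q e x z -> Q e x' z)
  (Hstep : forall e x, (forall d, lt d e -> Q d x (x d)) -> exists z, Q e x z) :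
  exists x, forall e, Q e x (x e).
Proof.
  set (tot := fun e (rec : forall d, lt d e -> A) (d : J) =>
     match excluded_middle_informative (lt d e) with
     | left p => rec d p | right _ => epsilon Ainh (fun _ => True) end).
  set (body := fun e (rec : forall d, lt d e -> A) => epsilon Ainh (Q e (tot e rec))).
  set (x := Fix wf (fun _ => A) body).
  assert (Hx : forall e, x e = body e (fun d _ => x d)).
  { intro e. unfold x. refine (@Fix_eq J lt wf (fun _ => A) body _ e).
    intros e0 f g Hfg. unfold body.
    replace (tot e0 f) with (tot e0 g); [reflexivity|].
    unfold tot. apply functional_extensionality; intro d.
    destruct (excluded_middle_informative _); auto. }
  exists x. intro e. induction (wf e) as [e _ IH].
  set (y := tot e (fun d _ => x d)).
  assert (Hy : forall d, lt d e -> y d = x d).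
  { intros d Hd. unfold y, tot. destruct (excluded_middle_informative _); auto; contradiction. }
  assert (HQ : Q e y (x e)).
  { rewrite Hx. unfold body. apply epsilon_spec. apply Hstep.
    intros d Hd. rewrite Hy by exact Hd. eapply Hloc; [|apply IH; exact Hd].
    intros d' Hd'. symmetry. apply Hy. eapply tr; eauto. }
  eapply Hloc; [|exact HQ]. intros; apply Hy; auto.
Qed.
Require Import Defs.
Import ListNotations.

Section Top.
Variable X : Type.
Variable op : (X -> Prop) -> Prop.
Hypothesis Htop : is_topology op.

Lemma op_ext U V : op U -> (forall x, U x <-> V x) -> op V.
Proof.
  intros H E. replace V with U; auto. apply functional_extensionality; intro x.
  apply propositional_extensionality. apply E.
Qed.

Lemma op_full : op (fun _ => True).
Proof. apply Htop. Qed.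

Lemma op_and U V : op U -> op V -> op (fun x => U x /\ V x).
Proof. apply Htop. Qed.

Lemma op_list {A : Type} (l : list A) (P : A -> X -> Prop) :
  (forall a, In a l -> op (P a)) -> op (fun x => forall a, In a l -> P a x).
Proof.
  induction l as [|a l IH]; intro H.
  - eapply op_ext. apply op_full. simpl; split; intros; [contradiction|exact I].
  - eapply op_ext. apply op_and. apply (H a). left; auto. apply IH. intros; apply H; right; auto.
    intro x; simpl; split.
    + intros [H1 H2] b [E|Hb]; [subst; auto| auto].
    + intro H1; split; auto.
Qed.

Lemma op_impl (P : Prop) U : (P -> op U) -> op (fun x => P -> U x).
Proof.
  intro H. destruct (classic P) as [p|np].
  - eapply op_ext. exact (H p). intro; split; auto.
  - eapply op_ext. apply op_full. intro; split; intros; [contradiction| exact I].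
Qed.
Lemma op_impl2 (P Q : Prop) U V : (P -> op U) -> (Q -> op V) -> op (fun x => (P -> U x) /\ (Q -> V x)).
Proof. intros; apply (op_and (fun x => P -> U x) (fun x => Q -> V x)); apply op_impl; auto. Qed.
End Top.

Section Gen.
Variable G : TopGroup.
Variable M : GSpace G.
Variable J : Type.
Variable lt : J -> J -> Prop.
Hypothesis wf : well_founded lt.
Hypothesis tr : forall a b c, lt a b -> lt b c -> lt a c.
Hypothesis tot : forall a b, lt a b \/ a = b \/ lt b a.
Variable g : J -> J -> M -> M.
Hypothesis gepi : forall d e, lt d e \/ d = e -> epimorphism M M (g d e).
Hypothesis gid : forall d x, g d d x = x.
Hypothesis gcomp : forall d e h, (lt d e \/ d = e) -> (lt e h \/ e = h) ->
   forall x, g d h x = g d e (g e h x).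

Definition Sys : InvSys G := @mkInvSys G J lt wf tr tot (fun _ => M) g gepi gid gcomp.
Definition L := lim_carrier Sys.
Definition pr (x : L) (i : J) : M := proj1_sig x i.
Lemma pr_coh (x : L) d e : lt d e \/ d = e -> g d e (pr x e) = pr x d.
Proof. exact (proj2_sig x d e). Qed.

Lemma L_eq (x y : L) : (forall i, pr x i = pr y i) -> x = y.
Proof.
  intro H. destruct x as [x Hx], y as [y Hy]. unfold pr in H; simpl in H.
  assert (x = y) by (apply functional_extensionality_dep; exact H). subst.
  f_equal. apply proof_irrelevance.
Qed.

Lemma Mgs : is_gspace G (gs_open M) (gs_act M).
Proof. exact (gs_ax M). Qed.
Lemma Mtop : is_topology (gs_open M). Proof. apply Mgs. Qed.
Lemma Mhaus : hausdorff (gs_open M). Proof. apply Mgs. Qed.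
Lemma Mcomp : compact (gs_open M). Proof. apply Mgs. Qed.
Lemma Minh : inhabited M. Proof. apply Mgs. Qed.
Lemma Gtop : is_topology (tg_open G). Proof. apply tg_top. Qed.

Lemma g_cont d e : lt d e \/ d = e -> forall V, gs_open M V -> gs_open M (fun z => V (g d e z)).
Proof. intros H V HV. apply (gepi d e H). exact HV. Qed.

Lemma le_trans' a b c : (lt a b \/ a = b) -> (lt b c \/ b = c) -> (lt a c \/ a = c).
Proof. intros [H1|H1] [H2|H2]; subst; eauto. Qed.

Lemma lt_irrefl a : ~ lt a a.
Proof. intro H. induction (wf a) as [a _ IH]. exact (IH a H H). Qed.

Lemma list_max (l : list J) : l <> [] -> exists m, In m l /\ forall i, In i l -> lt i m \/ i = m.
Proof.
  induction l as [|a l IH]; intro H. congruence.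
  destruct l as [|b l'].
  - exists a. split. left; auto. intros i [E|[]]; subst; auto.
  - destruct IH as [m [Hm Hall]]. congruence.
    destruct (tot a m) as [A|[A|A]].
    + exists m. split. right; auto. intros i [E|Hi]; subst; auto.
    + subst. exists m. split. left; auto. intros i [E|Hi]; subst; auto.
    + exists a. split. left; auto. intros i [E|Hi]; subst; auto.
      destruct (Hall i Hi) as [B|B]; subst; auto. left; eauto.
Qed.

Definition EPprop := forall e (t : J -> M),
  (forall d d', lt d d' -> lt d' e -> g d d' (t d') = t d) ->
  exists y, forall d, lt d e -> g d e y = t d.

Lemma thread_through (EP : EPprop) d (a : M) : exists x : L, pr x d = a.
Proof.
  destruct (@wf_rec_exists J M lt wf tr Minh
     (fun e x z => (forall d', lt d' e -> g d' e z = x d') /\ (lt e d \/ e = d -> z = g e d a)))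
    as [x Hx].
  - intros e x x' z Hxx [H1 H2]. split; auto. intros d' Hd'. rewrite <- Hxx; auto.
  - intros e x IH. destruct (classic (lt e d \/ e = d)) as [Hed|Hed].
    + exists (g e d a). split; auto. intros d' Hd'.
      rewrite <- gcomp by auto. symmetry. apply (proj2 (IH d' Hd')).
      destruct Hed; subst; eauto.
    + destruct (EP e x) as [y Hy].
      * intros d1 d2 H12 H2e. apply (proj1 (IH d2 H2e)). auto.
      * exists y. split; auto. intro; contradiction.
  - assert (Hc : forall d' e, lt d' e \/ d' = e -> g d' e (x e) = x d').
    { intros d' e [H|H]. apply (proj1 (Hx e)); auto. subst; apply gid. }
    exists (exist _ x Hc). unfold pr; simpl. rewrite (proj2 (Hx d)) by auto. apply gid.
Qed.

Lemma L_inh (EP : EPprop) : inhabited L.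
Proof.
  destruct Minh as [m].
  destruct (classic (exists d : J, True)) as [[d _]|H].
  - destruct (thread_through EP d m) as [x _]. exact (inhabits x).
  - assert (Hc : forall d' e : J, lt d' e \/ d' = e -> g d' e m = m).
    { intros d'. exfalso. apply H. exists d'. auto. }
    exact (inhabits (exist _ (fun _ => m) Hc : L)).
Qed.

Lemma pr_cont i : forall V, gs_open M V -> lim_open (S:=Sys) (fun x => V (pr x i)).
Proof.
  intros V HV x Hx. exists [i], (fun _ => V). split; [|split].
  - intros; exact HV.
  - intros j [E|[]]; subst; exact Hx.
  - intros y Hy. apply (Hy i). left; auto.
Qed.

Lemma lim_top : is_topology (lim_open (S:=Sys)).
Proof.
  split; [|split].
  - intros x _. exists [], (fun _ _ => True). simpl. repeat split; auto; intros; contradiction.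
  - intros U V HU HV x [Ux Vx].
    destruct (HU x Ux) as [l1 [V1 [A1 [B1 C1]]]].
    destruct (HV x Vx) as [l2 [V2 [A2 [B2 C2]]]].
    exists (l1 ++ l2), (fun j z => (In j l1 -> V1 j z) /\ (In j l2 -> V2 j z)).
    split; [|split].
    + intros j _. change (gs_open M (fun z => (In j l1 -> V1 j z) /\ (In j l2 -> V2 j z))).
      apply (op_impl2 _ _ Mtop); [exact (A1 j)|exact (A2 j)].
    + intros j _. split; auto.
    + intros y Hy. split.
      * apply C1. intros i Hi. apply (Hy i). apply in_or_app; auto. auto.
      * apply C2. intros i Hi. apply (Hy i). apply in_or_app; auto. auto.
  - intros F HF x [U [FU Ux]].
    destruct (HF U FU x Ux) as [l [V [A [B C]]]].
    exists l, V. split; [|split]; auto. intros y Hy. exists U. auto.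
Qed.

Lemma lim_haus : hausdorff (lim_open (S:=Sys)).
Proof.
  intros x y Hxy.
  assert (Hi : exists i, pr x i <> pr y i).
  { apply NNPP. intro H. apply Hxy. apply L_eq. intro i. apply NNPP. intro H2. apply H. eauto. }
  destruct Hi as [i Hi].
  destruct (Mhaus _ _ Hi) as [U [V [HU [HV [Ux [Vy D]]]]]].
  exists (fun z => U (pr z i)), (fun z => V (pr z i)).
  repeat split; auto using pr_cont.
Qed.

Lemma lim_act_pr h x i : pr (lim_act (S:=Sys) h x) i = gs_act M h (pr x i).
Proof. reflexivity. Qed.

Lemma act_cont_list (l : list J) (V : J -> M -> Prop) (h : G) (x : L) :
  (forall j, In j l -> gs_open M (V j)) ->
  (forall j, In j l -> V j (gs_act M h (pr x j))) ->
  exists A B, tg_open G A /\ A h /\ (forall j, In j l -> gs_open M (B j)) /\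
    (forall j, In j l -> B j (pr x j)) /\
    forall h' (y : L), A h' -> (forall j, In j l -> B j (pr y j)) ->
      forall j, In j l -> V j (gs_act M h' (pr y j)).
Proof.
  induction l as [|j l IH]; intros HV Hx.
  - exists (fun _ => True), (fun _ _ => True). split. apply Gtop. split. exact I.
    split. intros; contradiction. split. intros; contradiction. intros; contradiction.
  - destruct IH as [A [B [HA [Ah [HB [Bx Hall]]]]]].
    { intros; apply HV; right; auto. } { intros; apply Hx; right; auto. }
    assert (Hc := proj1 (proj2 (proj2 (proj2 (proj2 Mgs))))).
    destruct (Hc (V j) (HV j (or_introl eq_refl)) (h, pr x j) (Hx j (or_introl eq_refl)))
      as [A1 [B1 [HA1 [HB1 [A1h [B1x H1]]]]]].
    exists (fun k => A k /\ A1 k), (fun k z => (k = j -> B1 z) /\ (In k l -> B k z)).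
    split; [|split; [|split; [|split]]].
    + apply op_and; auto. apply Gtop.
    + simpl; auto.
    + intros k _. apply (op_impl2 _ _ Mtop); auto.
    + intros k Hk. split; auto. intro; subst; auto.
    + intros h' y [Ah' A1h'] Hy k [E|Hk].
      * subst k. apply (H1 (h', pr y j)); simpl; auto. apply (Hy j). left; auto. auto.
      * apply Hall; auto. intros i Hi. apply (Hy i). right; auto. auto.
Qed.

Lemma lim_act_cont : continuous (prod_open (tg_open G) (lim_open (S:=Sys))) (lim_open (S:=Sys))
   (fun p => lim_act (S:=Sys) (fst p) (snd p)).
Proof.
  intros W HW [h x] Hp. simpl in Hp.
  destruct (HW _ Hp) as [l [V [HV [Vx C]]]].
  destruct (act_cont_list l V h x HV Vx) as [A [B [HA [Ah [HB [Bx Hall]]]]]].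
  exists A, (fun y : L => forall j, In j l -> B j (pr y j)). split; [|split; [|split; [|split]]]; auto.
  - intros y Hy. exists l, B. split; [|split]; auto.
  - intros [h' y] Ah' By. simpl in *. apply C. intros i Hi. apply Hall; auto.
Qed.

Section Compact.
Variable F : (L -> Prop) -> Prop.
Hypothesis HF : forall U, F U -> lim_open (S:=Sys) U.
Hypothesis Hcov : forall x, exists U, F U /\ U x.

Definition Cov (A : L -> Prop) := exists l : list (L -> Prop),
  (forall U, In U l -> F U) /\ forall y, A y -> exists U, In U l /\ U y.

Lemma Cov_mono (A B : L -> Prop) : (forall y, A y -> B y) -> Cov B -> Cov A.
Proof. intros H [l [H1 H2]]. exists l. split; auto. Qed.

Lemma Cov_union A B : Cov A -> Cov B -> Cov (fun y => A y \/ B y).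
Proof.
  intros [l1 [H1 H1']] [l2 [H2 H2']]. exists (l1 ++ l2). split.
  - intros U HU. apply in_app_or in HU. destruct HU; auto.
  - intros y [Ay|By].
    + destruct (H1' y Ay) as [U [HU1 HU2]]. exists U. split; auto. apply in_or_app; auto.
    + destruct (H2' y By) as [U [HU1 HU2]]. exists U. split; auto. apply in_or_app; auto.
Qed.

Lemma Cov_empty : Cov (fun _ => False).
Proof. exists []. split; intros; contradiction. Qed.

Hypothesis NoCov : ~ Cov (fun _ => True).

Definition Bad e z := forall W, gs_open M W -> W z -> ~ Cov (fun y => W (pr y e)).

Lemma combine (x : J -> M) d0 V0 d1 V1 :
  (lt d0 d1 \/ d0 = d1) -> g d0 d1 (x d1) = x d0 ->
  gs_open M V0 -> V0 (x d0) -> gs_open M V1 -> V1 (x d1) ->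
  exists V, gs_open M V /\ V (x d1) /\ forall y : L, V (pr y d1) -> V0 (pr y d0) /\ V1 (pr y d1).
Proof.
  intros Hle Hx HV0 V0x HV1 V1x. exists (fun z => V1 z /\ V0 (g d0 d1 z)).
  split; [|split].
  - apply op_and. apply Mtop. auto. apply g_cont; auto.
  - rewrite Hx; auto.
  - intros y [A B]. rewrite pr_coh in B; auto.
Qed.

Lemma bad_step e (x : J -> M) :
  (forall d, lt d e -> (forall d', lt d' d -> g d' d (x d) = x d') /\ Bad d (x d)) ->
  exists z, (forall d', lt d' e -> g d' e z = x d') /\ Bad e z.
Proof.
  intro IH. apply NNPP. intro Hno.
  set (Phi := fun O : M -> Prop => gs_open M O /\ (Cov (fun y => O (pr y e)) \/
        exists d, lt d e /\ exists V, gs_open M V /\ V (x d) /\ forall w, O w -> ~ V (g d e w))).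
  assert (Hphi : forall z, exists O, Phi O /\ O z).
  { intro z. destruct (classic (forall d', lt d' e -> g d' e z = x d')) as [Hc|Hc].
    - assert (Hb : ~ Bad e z) by (intro Hb; apply Hno; eauto).
      unfold Bad in Hb. apply not_all_ex_not in Hb. destruct Hb as [W HW].
      destruct (classic (gs_open M W)) as [HW1|HW1]; [|exfalso; apply HW; intro; contradiction].
      destruct (classic (W z)) as [HW2|HW2]; [|exfalso; apply HW; intros _ ?; contradiction].
      exists W. split; auto. split; auto. left. apply NNPP. intro C. apply HW. auto.
    - apply not_all_ex_not in Hc. destruct Hc as [d Hd].
      destruct (classic (lt d e)) as [Hde|Hde]; [|exfalso; apply Hd; intro; contradiction].
      assert (Hne : g d e z <> x d) by (intro E; apply Hd; auto).
      destruct (Mhaus _ _ Hne) as [U [V [HU [HV [Uz [Vx D]]]]]].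
      exists (fun w => U (g d e w)). split; auto. split. apply g_cont; auto.
      right. exists d. split; auto. exists V. repeat split; auto. intros w Uw Vw. apply (D _ (conj Uw Vw)). }
  destruct (Mcomp Phi (fun O HO => proj1 HO) Hphi) as [lO [HlO HcovO]].
  assert (Claim : forall l : list (M -> Prop), (forall O, In O l -> Phi O) ->
     exists Wc : M -> Prop, Cov (fun y => Wc (pr y e)) /\
       ((forall w, (exists O, In O l /\ O w) -> Wc w) \/
        exists d, lt d e /\ exists V, gs_open M V /\ V (x d) /\
          forall y : L, V (pr y d) -> (exists O, In O l /\ O (pr y e)) -> Wc (pr y e))).
  { induction l as [|O l IHl]; intro Hl.
    - exists (fun _ => False). split. apply Cov_mono with (fun _ => False); auto. apply Cov_empty.
      left. intros w [O [[] _]].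
    - destruct IHl as [Wc [HWc Hor]]. intros; apply Hl; right; auto.
      destruct (Hl O (or_introl eq_refl)) as [HO [HOc|[d0 [Hd0 [V0 [HV0 [V0x HV0O]]]]]]].
      + exists (fun w => Wc w \/ O w). split. apply Cov_union; auto.
        destruct Hor as [Hl'|[d [Hd [V [HV [Vx HVy]]]]]].
        * left. intros w [O' [[E|HO'] Ow]]. subst; auto. left; apply Hl'; eauto.
        * right. exists d. split; auto. exists V. repeat split; auto.
          intros y Vy [O' [[E|HO'] Ow]]. subst; auto. left; apply HVy; eauto.
      + exists Wc. split; auto. right.
        assert (Key : forall y : L, V0 (pr y d0) -> ~ O (pr y e)).
        { intros y Vy Oy. apply (HV0O _ Oy). rewrite pr_coh; auto. }
        destruct Hor as [Hl'|[d1 [Hd1 [V1 [HV1 [V1x HV1y]]]]]].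
        * exists d0. split; auto. exists V0. repeat split; auto.
          intros y Vy [O' [[E|HO'] Ow]]. subst. exfalso; eapply Key; eauto. apply Hl'; eauto.
        * destruct (tot d0 d1) as [T|[T|T]].
          -- destruct (combine x d0 V0 d1 V1 (or_introl T)) as [V [HV [Vx HVy]]]; auto.
             apply (proj1 (IH d1 Hd1)); auto.
             exists d1. split; auto. exists V. repeat split; auto.
             intros y Vy [O' [[E|HO'] Ow]]. subst. exfalso; eapply Key; eauto. apply HVy; auto.
             apply HV1y; eauto. apply HVy; auto.
          -- subst d1. destruct (combine x d0 V0 d0 V1 (or_intror eq_refl)) as [V [HV [Vx HVy]]]; auto.
             exists d0. split; auto. exists V. repeat split; auto.
             intros y Vy [O' [[E|HO'] Ow]]. subst. exfalso; eapply Key; eauto. apply HVy; auto.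
             apply HV1y; eauto. apply HVy; auto.
          -- destruct (combine x d1 V1 d0 V0 (or_introl T)) as [V [HV [Vx HVy]]]; auto.
             apply (proj1 (IH d0 Hd0)); auto.
             exists d0. split; auto. exists V. repeat split; auto.
             intros y Vy [O' [[E|HO'] Ow]]. subst. exfalso; eapply Key; eauto. apply HVy; auto.
             apply HV1y; eauto. apply HVy; auto. }
  destruct (Claim lO HlO) as [Wc [HWc [Hl'|[d [Hd [V [HV [Vx HVy]]]]]]]].
  - apply NoCov. eapply Cov_mono; [|exact HWc]. intros y _. apply Hl'. apply HcovO.
  - apply (proj2 (IH d Hd) V HV Vx). eapply Cov_mono; [|exact HWc]. intros y Vy. apply HVy; auto.
Qed.

Lemma compact_contra : False.
Proof.
  destruct (@wf_rec_exists J M lt wf tr Minh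
     (fun e x z => (forall d', lt d' e -> g d' e z = x d') /\ Bad e z)) as [x Hx].
  - intros e x x' z Hxx [H1 H2]. split; auto. intros d' Hd'. rewrite <- Hxx; auto.
  - intros e x IH. apply bad_step. intros d Hd. apply IH; auto.
  - assert (Hc : forall d' e, lt d' e \/ d' = e -> g d' e (x e) = x d').
    { intros d' e [H|H]. apply (proj1 (Hx e)); auto. subst; apply gid. }
    set (xt := exist _ x Hc : L).
    destruct (Hcov xt) as [U [FU Ux]].
    destruct (HF U FU xt Ux) as [li [V [HV [Vx C]]]].
    destruct (classic (li = [])) as [E|NE].
    + subst li. apply NoCov. exists [U]. split. intros U' [E|[]]; subst; auto.
      intros y _. exists U. split. left; auto. apply C. intros; contradiction.
    + destruct (list_max li NE) as [m [Hm Hmax]].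
      apply (proj2 (Hx m) (fun z => forall i, In i li -> V i (g i m z))).
      * apply (op_list _ _ Mtop). intros i Hi. apply g_cont; [apply Hmax; exact Hi| exact (HV i Hi)].
      * intros i Hi. change (V i (g i m (pr xt m))). rewrite pr_coh; auto.
      * exists [U]. split. intros U' [E|[]]; subst; auto.
        intros y Hy. exists U. split. left; auto. apply C. intros i Hi.
        specialize (Hy i Hi). simpl in Hy. rewrite pr_coh in Hy; auto.
Qed.
End Compact.

Lemma lim_compact : compact (lim_open (S:=Sys)).
Proof.
  intros F HF Hcov. apply NNPP. intro H. apply (compact_contra F HF Hcov). intros [l [H1 H2]]. apply H. exists l. split; auto.
Qed.

Lemma lim_gspace (EP : EPprop) : is_gspace G (lim_open (S:=Sys)) (lim_act (S:=Sys)).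
Proof.
  split; [apply lim_top|]. split; [apply L_inh, EP|]. split; [apply lim_compact|].
  split; [apply lim_haus|]. split; [apply lim_act_cont|]. split.
  - intro x. apply L_eq. intro i. rewrite lim_act_pr. apply Mgs.
  - intros h1 h2 x. apply L_eq. intro i. rewrite !lim_act_pr. apply Mgs.
Qed.
End Gen.
Lemma epi_id {G : TopGroup} (X : GSpace G) : epimorphism X X (fun y => y).
Proof.
  split; [|split].
  - intro y; exists y; auto.
  - intros V HV. exact HV.
  - intros h y; reflexivity.
Qed.

Lemma epi_comp {G : TopGroup} (X Y Z : GSpace G) f h :
  epimorphism X Y f -> epimorphism Y Z h -> epimorphism X Z (fun y => h (f y)).
Proof.
  intros [S1 [C1 E1]] [S2 [C2 E2]]. split; [|split].
  - intro z. destruct (S2 z) as [y Hy]. destruct (S1 y) as [w Hw]. exists w. congruence.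
  - intros V HV. apply (C1 (fun y => V (h y))). apply C2. exact HV.
  - intros a y. rewrite E1, E2. reflexivity.
Qed.

Lemma epi_ext {G : TopGroup} (X Y : GSpace G) f f' :
  (forall y, f y = f' y) -> epimorphism X Y f -> epimorphism X Y f'.
Proof.
  intros E H. replace f' with f; auto. apply functional_extensionality; auto.
Qed.

Lemma pr_epi (G : TopGroup) (M : GSpace G) J lt wf tr tot g gepi gid gcomp
  (EP : @EPprop G M J lt g) (H : is_gspace G (lim_open (S:=@Sys G M J lt wf tr tot g gepi gid gcomp))
      (lim_act (S:=@Sys G M J lt wf tr tot g gepi gid gcomp))) j :
  epimorphism (mkGSpace H) M (fun x => @pr G M J lt wf tr tot g gepi gid gcomp x j).
Proof.
  split; [|split].
  - intro a. apply thread_through; auto.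
  - intros V HV. apply pr_cont. exact HV.
  - intros h y. reflexivity.
Qed.

Section Main.
Variable G : TopGroup.
Variable K : GSpace G -> Prop.
Hypothesis HK : closed_under_proj_limits K.
Variable M : GSpace G.
Hypothesis KM : K M.
Hypothesis Huniv : forall N, K N -> factor_of N M.
Variable phi : M -> M.
Hypothesis Hphi : epimorphism M M phi.
Variables x1 x2 : M.
Hypothesis Hne : x1 <> x2.
Hypothesis Heq : phi x1 = phi x2.

Definition X := (gs_carrier M * gs_carrier M)%type.
Definition I := Ix X.
Definition lt := @ilt X.
Definition Fam := I -> M -> M.

Definition P (γ : I) (F : I -> Fam) (z : Fam) : Prop :=
  (forall δ y, ~ lt δ γ -> z δ y = y) /\
  (forall δ, lt δ γ -> epimorphism M M (z δ)) /\
  (forall δ η, lt δ η -> lt η γ -> forall y, z δ y = F η δ (z η y)) /\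
  (forall t : I -> M, (forall δ η, lt δ η -> lt η γ -> F η δ (t η) = t δ) ->
     exists y, forall δ, lt δ γ -> z δ y = t δ) /\
  (forall δ, lt δ γ -> z δ x1 = z δ x2).

Definition valid (γ : I) (F : I -> Fam) := forall η, lt η γ -> P η F (F η).

Lemma P_loc γ F F' z : (forall η, lt η γ -> F η = F' η) -> P γ F z -> P γ F' z.
Proof.
  intros E [A [B [C [D H5]]]]. split; [|split; [|split; [|split]]]; auto.
  - intros δ η H1 H2 y. rewrite <- E; auto.
  - intros t Ht. apply D. intros δ η H1 H2. rewrite E; auto.
Qed.

Lemma valid_loc γ F F' : (forall η, lt η γ -> F η = F' η) -> valid γ F -> valid γ F'.
Proof.
  intros E V η Hη. rewrite <- E by auto. apply P_loc with F; auto.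
  intros η' H'. apply E. eapply ilt_trans; eauto.
Qed.

Section Restr.
Variable γ : I.
Variable F : I -> Fam.
Hypothesis HV : valid γ F.

Definition Sub := { δ : I | lt δ γ }.
Definition slt (a b : Sub) := lt (proj1_sig a) (proj1_sig b).
Lemma slt_wf : well_founded slt.
Proof. unfold slt. apply wf_inverse_image, ilt_wf. Qed.
Lemma slt_tr a b c : slt a b -> slt b c -> slt a c.
Proof. unfold slt. apply ilt_trans. Qed.
Lemma Sub_eq (a b : Sub) : proj1_sig a = proj1_sig b -> a = b.
Proof. destruct a, b; simpl; intro; subst. f_equal. apply proof_irrelevance. Qed.
Lemma slt_tot a b : slt a b \/ a = b \/ slt b a.
Proof.
  unfold slt. destruct (@ilt_total X (proj1_sig a) (proj1_sig b)) as [H|[H|H]]; auto.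
  right; left. apply Sub_eq; auto.
Qed.
Definition sg (a b : Sub) : M -> M := F (proj1_sig b) (proj1_sig a).
Lemma sgid a y : sg a a y = y.
Proof. unfold sg. destruct a as [a Ha]; simpl. apply (HV a Ha). apply ilt_irrefl. Qed.
Lemma sgepi a b : slt a b \/ a = b -> epimorphism M M (sg a b).
Proof.
  intros [H|H].
  - destruct b as [b Hb]. apply (HV b Hb). exact H.
  - subst. apply epi_ext with (fun y => y). intro; symmetry; apply sgid. apply epi_id.
Qed.
Lemma sgcomp a b c : (slt a b \/ a = b) -> (slt b c \/ b = c) ->
   forall y, sg a c y = sg a b (sg b c y).
Proof.
  intros [H1|H1] [H2|H2] y; subst; rewrite ?sgid; auto.
  destruct c as [c Hc]. unfold sg, slt in *; simpl in *.
  apply (proj1 (proj2 (proj2 (HV c Hc)))); auto.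
Qed.

Definition RS := @Sys G M Sub slt slt_wf slt_tr slt_tot sg sgepi sgid sgcomp.

Lemma sEP : @EPprop G M Sub slt sg.
Proof.
  intros e t Ht. destruct e as [e He].
  destruct (Minh G M) as [m0].
  set (t' := fun δ : I => match excluded_middle_informative (lt δ γ) with
             | left p => t (exist _ δ p) | right _ => m0 end).
  assert (Ht' : forall δ (p : lt δ γ), t' δ = t (exist _ δ p)).
  { intros δ p. unfold t'. destruct (excluded_middle_informative _); [|contradiction].
    f_equal. apply Sub_eq; auto. }
  destruct (proj1 (proj2 (proj2 (proj2 (HV e He)))) t') as [y Hy].
  - intros δ η H1 H2. assert (Hη : lt η γ) by (eapply ilt_trans; eauto).
    assert (Hδ : lt δ γ) by (eapply ilt_trans; eauto).
    rewrite (Ht' η Hη), (Ht' δ Hδ). apply (Ht (exist _ δ Hδ) (exist _ η Hη)); auto.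
  - exists y. intros [d Hd] Hde. unfold sg; simpl. unfold slt in Hde; simpl in Hde.
    rewrite Hy by auto. apply Ht'.
Qed.

Definition RSgs := @lim_gspace G M Sub slt slt_wf slt_tr slt_tot sg sgepi sgid sgcomp sEP.
Definition RL : GSpace G := mkGSpace RSgs.
Lemma KRL : K RL.
Proof. apply HK. intros; exact KM. Qed.

Definition psi : M -> RL :=
  proj1_sig (constructive_indefinite_description _ (Huniv RL KRL)).
Lemma psi_epi : epimorphism M RL psi.
Proof. unfold psi. destruct (constructive_indefinite_description _ _); auto. Qed.

Definition znew : Fam := fun δ y =>
  match excluded_middle_informative (lt δ γ) with
  | left p => @pr G M Sub slt slt_wf slt_tr slt_tot sg sgepi sgid sgcomp (psi (phi y)) (exist _ δ p)
  | right _ => y end.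

Lemma znewE δ (p : lt δ γ) y :
  znew δ y = @pr G M Sub slt slt_wf slt_tr slt_tot sg sgepi sgid sgcomp (psi (phi y)) (exist _ δ p).
Proof.
  unfold znew. destruct (excluded_middle_informative _); [|contradiction].
  f_equal. apply Sub_eq; auto.
Qed.

Lemma znew_P : P γ F znew.
Proof.
  split; [|split; [|split; [|split]]].
  - intros δ y H. unfold znew. destruct (excluded_middle_informative _); auto; contradiction.
  - intros δ Hδ. eapply epi_ext. intro y. symmetry. apply (znewE δ Hδ).
    apply (epi_comp M M M phi (fun w => @pr G M Sub slt slt_wf slt_tr slt_tot sg sgepi sgid sgcomp (psi w) (exist _ δ Hδ))).
    exact Hphi.
    apply (epi_comp M RL M psi (fun z => @pr G M Sub slt slt_wf slt_tr slt_tot sg sgepi sgid sgcomp z (exist _ δ Hδ))).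
    exact psi_epi.
    apply (pr_epi G M Sub slt slt_wf slt_tr slt_tot sg sgepi sgid sgcomp sEP RSgs).
  - intros δ η H1 H2 y. rewrite (znewE η H2). assert (Hδ : lt δ γ) by (eapply ilt_trans; eauto).
    rewrite (znewE δ Hδ). symmetry.
    apply (@pr_coh G M Sub slt slt_wf slt_tr slt_tot sg sgepi sgid sgcomp (psi (phi y))
      (exist _ δ Hδ) (exist _ η H2)). left. exact H1.
  - intros t Ht.
    assert (Hc : forall d e : Sub, slt d e \/ d = e -> sg d e (t (proj1_sig e)) = t (proj1_sig d)).
    { intros d e [H|H]. apply Ht; auto. apply (proj2_sig e). subst. apply sgid. }
    set (th := exist _ (fun j : Sub => t (proj1_sig j)) Hc : RL).
    destruct (proj1 psi_epi th) as [w Hw]. destruct (proj1 Hphi w) as [y Hy].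
    exists y. intros δ Hδ. rewrite (znewE δ Hδ). rewrite Hy, Hw. reflexivity.
  - intros δ Hδ. rewrite !(znewE δ Hδ). rewrite Heq. reflexivity.
Qed.
End Restr.

Lemma F_exists : exists F : I -> Fam, forall γ, P γ F (F γ).
Proof.
  destruct (@wf_rec_exists I Fam lt (@ilt_wf X) (@ilt_trans X) (inhabits (fun _ y => y))
     (fun γ F z => valid γ F -> P γ F z)) as [F HF].
  - intros e F F' z E Hq Hv. apply P_loc with F; auto.
    apply Hq. apply valid_loc with F'; auto. intros; symmetry; auto.
  - intros e F IH. destruct (classic (valid e F)) as [Hv|Hv].
    + exists (znew e F Hv). intros _. apply znew_P.
    + exists (fun _ y => y). intro; contradiction.
  - exists F. intro γ. induction (@ilt_wf X γ) as [γ _ IH]. apply HF. intros η Hη. apply IH; auto.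
Qed.

Lemma contradiction_final : False.
Proof.
  destruct F_exists as [F HF].
  set (g := fun d e : I => F e d).
  assert (gid : forall d y, g d d y = y).
  { intros d y. apply (HF d). apply ilt_irrefl. }
  assert (gepi : forall d e, lt d e \/ d = e -> epimorphism M M (g d e)).
  { intros d e [H|H]. apply (HF e); auto. subst. apply epi_ext with (fun y => y).
    intro; symmetry; apply gid. apply epi_id. }
  assert (gcomp : forall d e h, (lt d e \/ d = e) -> (lt e h \/ e = h) ->
     forall y, g d h y = g d e (g e h y)).
  { intros d e h [H1|H1] [H2|H2] y; subst; rewrite ?gid; auto.
    apply (proj1 (proj2 (proj2 (HF h)))); auto. }
  assert (EP : @EPprop G M I lt g).
  { intros e t Ht. apply (proj1 (proj2 (proj2 (proj2 (HF e))))). intros; apply Ht; auto. }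
  set (Hgs := @lim_gspace G M I lt (@ilt_wf X) (@ilt_trans X) (@ilt_total X) g gepi gid gcomp EP).
  set (LL := mkGSpace Hgs).
  assert (KLL : K LL) by (apply HK; intros; exact KM).
  destruct (Huniv LL KLL) as [psi0 Hpsi].
  set (prL := fun (z : LL) (i : I) => @pr G M I lt (@ilt_wf X) (@ilt_trans X) (@ilt_total X) g gepi gid gcomp z i).
  assert (Hsep : forall a : I, exists p : X,
     prL (psi0 (fst p)) a = prL (psi0 (snd p)) a /\
     prL (psi0 (fst p)) (@isucc X a) <> prL (psi0 (snd p)) (@isucc X a)).
  { intro a. set (b := @isucc X a).
    assert (Hab : lt a b) by (apply isucc_gt; exact (x1, x1)).
    destruct (thread_through G M I lt (@ilt_wf X) (@ilt_trans X) (@ilt_total X) g gepi gid gcomp EP b x1) as [s Hs].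
    destruct (thread_through G M I lt (@ilt_wf X) (@ilt_trans X) (@ilt_total X) g gepi gid gcomp EP b x2) as [t Ht].
    destruct (proj1 Hpsi s) as [u Hu]. destruct (proj1 Hpsi t) as [v Hv].
    exists (u, v). simpl. unfold prL. rewrite Hu, Hv. split.
    - rewrite <- (pr_coh _ _ _ _ _ _ _ _ _ _ _ s a b (or_introl Hab)).
      rewrite <- (pr_coh _ _ _ _ _ _ _ _ _ _ _ t a b (or_introl Hab)).
      rewrite Hs, Ht. apply (HF b). exact Hab.
    - rewrite Hs, Ht. exact Hne. }
  set (e := fun a : I => proj1_sig (constructive_indefinite_description _ (Hsep a))).
  assert (He : forall a, prL (psi0 (fst (e a))) a = prL (psi0 (snd (e a))) a /\
     prL (psi0 (fst (e a))) (@isucc X a) <> prL (psi0 (snd (e a))) (@isucc X a)).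
  { intro a. unfold e. destruct (constructive_indefinite_description _ _); auto. }
  apply (@no_inj X e). intros a a' Eaa.
  assert (Key : forall a a', lt a a' -> e a = e a' -> False).
  { intros c c' Hc Ec. destruct (He c) as [_ N]. destruct (He c') as [Q _].
    rewrite Ec in N. apply N.
    destruct (isucc_le _ c c' Hc) as [H|H].
    - unfold prL. rewrite <- (pr_coh _ _ _ _ _ _ _ _ _ _ _ (psi0 (fst (e c'))) (@isucc X c) c' (or_introl H)).
      rewrite <- (pr_coh _ _ _ _ _ _ _ _ _ _ _ (psi0 (snd (e c'))) (@isucc X c) c' (or_introl H)).
      unfold prL in Q. rewrite Q. reflexivity.
    - rewrite H. exact Q. }
  destruct (@ilt_total X a a') as [H|[H|H]]; auto.
  - exfalso; eauto.
  - exfalso; apply (Key a' a H); auto.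
Qed.
End Main.

Theorem mainTheorem2 (G : TopGroup) (K : GSpace G -> Prop)
  (HK : closed_under_proj_limits K) (M : GSpace G) (HM : universal K M) :
  coalescent M.
Proof.
  intros phi Hphi. split; auto. intros x1 x2 E. apply NNPP. intro Hne.
  destruct HM as [KM Huniv].
  exact (contradiction_final G K HK M KM Huniv phi Hphi x1 x2 Hne E).
Qed.
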